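(* Fix $c\ge0$ and consider $\partial_t u=\partial_{xx}u-c\partial_x u$ ($x>0$), $\partial_x u=g(u)$ ($x=0$), where $g$ satisfies: there is $y_1>0$ with $g(0)=g(y_1)=0$ and $g(y)<0$ for $y\in(0,y_1)$. Then for all sufficiently large $k$ there exist $T_k>0$ and a function $\overline u_k\in C([0,T_k],BUC([0,\infty)))$ such that: (1) $\overline u_k(\cdot,0)=1/k^2$; (2) $\overline u_k$ is a super-solution of the problem for $t\in(0,T_k]$; (3) $\overline u_k(0,T_k)=1/k$; (4) $T_k\to\infty$ as $k\to\infty$.
   Context: $g\in C^2(\mathbb{R},\mathbb{R})$ is $2\pi$-periodic. A super-solution on a time interval $(s,T)$ is a function $\overline u(x,t)$, continuous for $s\le t\le T$, satisfying classically $\partial_t\overline u\ge\partial_{xx}\overline u-c\partial_x\overline u$ for $x>0$, $t\in(s,T)$, and $\partial_x\overline u\le g(\overline u)$ at $x=0$, $t\in(s,T)$. *)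

(* Defs.v *)
From Stdlib Require Import Reals Lra.
From Coquelicot Require Import Coquelicot.
Open Scope R_scope.

Definition C2 (g : R -> R) : Prop :=
  (forall y, ex_derive g y) /\
  (forall y, ex_derive (Derive g) y) /\
  (forall y, continuous (Derive (Derive g)) y).

Definition periodic_2pi (g : R -> R) : Prop := forall y, g (y + 2 * PI) = g y.

(* Functions are written u x t (space x, time t). *)

Definition BUC0 (f : R -> R) : Prop :=
  (exists M, forall x, 0 <= x -> Rabs (f x) <= M) /\
  (forall eps, 0 < eps -> exists delta, 0 < delta /\
     forall x y, 0 <= x -> 0 <= y -> Rabs (x - y) < delta ->
       Rabs (f x - f y) < eps).

(* u belongs to C([0,T], BUC([0,oo))) : each time slice is BUC and
   t |-> u(.,t) is continuous for the sup norm on [0,oo). *)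
Definition C_BUC (T : R) (u : R -> R -> R) : Prop :=
  (forall t, 0 <= t <= T -> BUC0 (fun x => u x t)) /\
  (forall t, 0 <= t <= T -> forall eps, 0 < eps -> exists delta, 0 < delta /\
     forall t', 0 <= t' <= T -> Rabs (t' - t) < delta ->
       forall x, 0 <= x -> Rabs (u x t' - u x t) <= eps).

Definition cont_on_strip (s T : R) (u : R -> R -> R) : Prop :=
  forall x t, 0 <= x -> s <= t <= T -> forall eps, 0 < eps ->
    exists delta, 0 < delta /\
      forall x' t', 0 <= x' -> s <= t' <= T ->
        Rabs (x' - x) < delta -> Rabs (t' - t) < delta ->
        Rabs (u x' t' - u x t) < eps.

Definition right_dx0 (u : R -> R -> R) (t l : R) : Prop :=
  filterlim (fun h => (u h t - u 0 t) / h) (at_right 0) (locally l).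

(* classical super-solution on the time interval (s,T) of
   u_t = u_xx - c u_x (x>0), u_x = g(u) (x=0) *)
Definition supersolution (c : R) (g : R -> R) (s T : R) (u : R -> R -> R) : Prop :=
  cont_on_strip s T u /\
  (forall x t, 0 < x -> s < t < T ->
     ex_derive (fun t' => u x t') t /\
     (forall x', 0 < x' -> ex_derive (fun y => u y t) x') /\
     ex_derive (fun y => Derive (fun z => u z t) y) x /\
     Derive (fun t' => u x t') t >=
       Derive (fun y => Derive (fun z => u z t) y) x
       - c * Derive (fun y => u y t) x) /\
  (forall t, s < t < T ->
     exists l, right_dx0 u t l /\ l <= g (u 0 t)).

(* Main.v *)
Require Import Defs.
From Stdlib Require Import Reals Lra.
From Coquelicot Require Import Coquelicot.
Open Scope R_scope.

Lemma cpt_ed f t : continuity_pt f t -> forall eps, 0<eps -> exists d, 0<d /\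
  forall t', Rabs (t'-t) < d -> Rabs (f t' - f t) < eps.
Proof.
  intros H eps He. destruct (H eps He) as [d [Hd H1]]. exists d; split; auto.
  intros t' Ht. destruct (Req_dec t' t) as [->|Hn].
  - rewrite Rminus_diag, Rabs_R0; auto.
  - apply (H1 t'). split; [split; [exact I| auto]| exact Ht].
Qed.

Lemma g_lower g : C2 g -> g 0 = 0 -> exists L d, 1 <= L /\ 0 < d /\
  forall y, 0 <= y <= d -> -L*y <= g y.
Proof.
  intros [H1 [H2 _]] H0.
  assert (Hc : continuity_pt (Derive g) 0).
  { apply continuity_pt_filterlim. exact (ex_derive_continuous (K:=R_AbsRing) (V:=R_NormedModule) _ _ (H2 0)). }
  destruct (cpt_ed _ _ Hc 1 Rlt_0_1) as [d [Hd Hdd]].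
  exists (Rmax 1 (1 - Derive g 0)), (d/2). split; [apply Rmax_l|split; [lra|]].
  intros y Hy.
  destruct (MVT_gen g 0 y (Derive g)) as [c [Hc1 Hc2]].
  - intros x _. apply Derive_correct, H1.
  - intros x _. apply continuity_pt_filterlim; exact (ex_derive_continuous (K:=R_AbsRing) (V:=R_NormedModule) _ _ (H1 x)).
  - rewrite Rmin_left in Hc1 by lra. rewrite Rmax_right in Hc1 by lra.
    assert (Rabs (Derive g c - Derive g 0) < 1) by (apply Hdd; rewrite Rminus_0_r, Rabs_right; lra).
    apply Rabs_def2 in H.
    assert (Derive g c >= - Rmax 1 (1 - Derive g 0)).
    { generalize (Rmax_r 1 (1 - Derive g 0)); lra. }
    rewrite H0, Rminus_0_r, Rminus_0_r in Hc2. rewrite <- (Rminus_0_r (g y)), Hc2.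
    nra.
Qed.

Definition ff (gm t : R) := 8 * t / (1 + gm * t).
Definition ee gm t := sqrt (ff gm t).

Lemma ff_nn gm t : 1 <= gm -> 0 <= t -> 0 <= ff gm t.
Proof. intros; unfold ff. apply Rdiv_le_0_compat; nra. Qed.
Lemma ff_pos gm t : 1 <= gm -> 0 < t -> 0 < ff gm t.
Proof. intros; unfold ff. apply Rdiv_lt_0_compat; nra. Qed.
Lemma ee_pos gm t : 1 <= gm -> 0 < t -> 0 < ee gm t.
Proof. intros; unfold ee. apply sqrt_lt_R0, ff_pos; auto. Qed.
Lemma ee_nn gm t : 0 <= ee gm t.
Proof. apply sqrt_pos. Qed.
Lemma ee0 gm : ee gm 0 = 0.
Proof. unfold ee, ff. rewrite Rmult_0_r, Rdiv_0_l. apply sqrt_0. Qed.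

Lemma ee_le gm L t : 1 <= L -> gm = 32 * L^2 -> 0 <= t -> ee gm t <= / (2*L).
Proof.
  intros HL Hg Ht. unfold ee.
  rewrite <- (sqrt_pow2 (/(2*L))) by (apply Rlt_le, Rinv_0_lt_compat; lra).
  apply sqrt_le_1_alt. unfold ff.
  assert (1 <= gm) by nra.
  apply Rmult_le_reg_r with (1 + gm * t); [nra|].
  unfold Rdiv. rewrite Rmult_assoc, Rinv_l by nra.
  rewrite Hg. field_simplify; [|lra]. 
  apply Rmult_le_reg_r with (4 * L^2); [nra|].
  field_simplify; nra.
Qed.

Lemma ee_der gm t : 1 <= gm -> 0 < t ->
  is_derive (ee gm) t (4/((1+gm*t)^2 * ee gm t)).
Proof.
  intros Hg Ht. unfold ee, ff.
  assert (0 < 8 * t / (1 + gm * t)) by (apply Rdiv_lt_0_compat; nra).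
  assert (0 < sqrt (8 * t / (1 + gm * t))) by (apply sqrt_lt_R0; auto).
  auto_derive.
  - split; [nra|split; [lra| exact I]].
  - change (8*t*/(1+gm*t)) with (8*t/(1+gm*t)). set (s := sqrt _). field. split; [|nra]. unfold s; lra.
Qed.

Lemma ee_key gm t : 1 <= gm -> 0 < t ->
  / ee gm t - 4/((1+gm*t)^2 * ee gm t) <= gm.
Proof.
  intros Hg Ht. pose proof (ee_pos gm t Hg Ht) as He.
  set (e := ee gm t) in *. set (p := (1+gm*t)^2).
  assert (Hp : 0 < p) by (unfold p; nra).
  assert (E : / e - 4 / (p * e) = (p - 4) / (p * e)) by (field; lra).
  rewrite E.
  destruct (Rle_or_lt (gm*t) 1) as [H1|H1].
  - assert (p - 4 <= 0) by (assert (0 < gm*t) by nra; unfold p; nra).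
    assert ((p-4)/(p*e) <= 0).
    { unfold Rdiv. apply Rmult_le_0_r; [lra|]. apply Rlt_le, Rinv_0_lt_compat; nra. }
    lra.
  - assert (Hge : / gm <= e).
    { unfold e, ee. rewrite <- (sqrt_pow2 (/gm)) by (apply Rlt_le, Rinv_0_lt_compat; lra).
      apply sqrt_le_1_alt. unfold ff.
      apply Rmult_le_reg_r with (1 + gm * t); [nra|].
      unfold Rdiv. rewrite Rmult_assoc, Rinv_l by nra.
      apply Rmult_le_reg_r with (gm^2); [nra|].
      field_simplify; [|lra]. nra. }
    assert (Hie : / e <= gm).
    { rewrite <- (Rinv_inv gm). apply Rinv_le_contravar; [apply Rinv_0_lt_compat; lra| auto]. }
    assert ((p-4)/(p*e) <= / e).
    { apply Rmult_le_reg_r with (p*e); [nra|]. field_simplify; [|lra|lra]. 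
      lra. }
    lra.
Qed.

Lemma ee_cont gm t : 1 <= gm -> 0 <= t -> continuity_pt (ee gm) t.
Proof.
  intros Hg Ht. unfold ee.
  apply (continuity_pt_comp (ff gm) sqrt).
  - unfold ff. apply continuity_pt_div.
    + apply continuity_pt_mult; [apply continuity_pt_const; intros ? ?; auto| apply continuity_pt_id].
    + apply continuity_pt_plus; [apply continuity_pt_const; intros ? ?; auto|].
      apply continuity_pt_mult; [apply continuity_pt_const; intros ? ?; auto| apply continuity_pt_id].
    + nra.
  - apply continuity_pt_sqrt, ff_nn; auto.
Qed.

Definition ph (x e : R) := e * exp (- x / e).

Lemma ph_0 x : ph x 0 = 0.
Proof. unfold ph; ring. Qed.

Lemma expm_le1 z : 0 <= z -> exp (- z) <= 1.
Proof. intros. rewrite <- exp_0. destruct (Req_dec z 0) as [->|]. rewrite Ropp_0; lra.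
  left; apply exp_increasing; lra. Qed.

Lemma ph_nn x e : 0 <= e -> 0 <= ph x e.
Proof. intros; unfold ph. apply Rmult_le_pos; [auto| left; apply exp_pos]. Qed.

Lemma ph_le x e : 0 <= x -> 0 <= e -> ph x e <= e.
Proof.
  intros Hx He. destruct (Req_dec e 0) as [->|Hn]. rewrite ph_0; lra.
  unfold ph. assert (exp (- x / e) <= 1).
  { unfold Rdiv. rewrite Ropp_mult_distr_l_reverse. apply expm_le1.
    apply Rmult_le_pos; [auto| left; apply Rinv_0_lt_compat; lra]. }
  nra.
Qed.

Lemma ph_lipx1 x1 x2 e : 0 <= x1 <= x2 -> 0 <= e -> Rabs (ph x1 e - ph x2 e) <= x2 - x1.
Proof.
  intros Hx He. destruct (Req_dec e 0) as [->|Hn]. rewrite !ph_0, Rminus_0_r, Rabs_R0; lra.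
  unfold ph.
  assert (E : exp (- x2 / e) = exp (- x1 / e) * exp (- ((x2 - x1)/e))).
  { rewrite <- exp_plus. f_equal. field. auto. }
  rewrite E.
  assert (H1 : exp (- x1 / e) <= 1).
  { unfold Rdiv. rewrite Ropp_mult_distr_l_reverse. apply expm_le1.
    apply Rmult_le_pos; [lra| left; apply Rinv_0_lt_compat; lra]. }
  assert (H2 : exp (- ((x2 - x1)/e)) <= 1).
  { apply expm_le1. apply Rdiv_le_0_compat; lra. }
  assert (H3 : 1 - (x2-x1)/e <= exp (- ((x2 - x1)/e))).
  { generalize (exp_ineq1_le (- ((x2 - x1)/e))). lra. }
  pose proof (exp_pos (- x1 / e)).
  assert (H4 : e * ((x2-x1)/e) = x2 - x1) by (field; auto).
  set (A := exp (- x1 / e)) in *. set (B := exp (- ((x2 - x1)/e))) in *.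
  set (z := (x2-x1)/e) in *. assert (0 < e) by lra.
  assert (0 <= e * A * (1 - B)) by (apply Rmult_le_pos; [apply Rmult_le_pos|]; lra).
  assert (e * A * (1 - B) <= e * (1 - B)) by (apply Rmult_le_compat_r; [lra|]; nra).
  assert (e * (1 - B) <= e * z) by (apply Rmult_le_compat_l; lra).
  rewrite Rabs_right; nra.
Qed.

Lemma ph_lipx x1 x2 e : 0 <= x1 -> 0 <= x2 -> 0 <= e -> Rabs (ph x1 e - ph x2 e) <= Rabs (x1 - x2).
Proof.
  intros. destruct (Rle_or_lt x1 x2).
  - rewrite (Rabs_minus_sym x1 x2), (Rabs_right (x2 - x1)) by lra. apply ph_lipx1; lra.
  - rewrite (Rabs_minus_sym (ph x1 e)), (Rabs_right (x1 - x2)) by lra. apply ph_lipx1; lra.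
Qed.

Lemma ph_der x e : 0 < e -> is_derive (ph x) e (exp (- x / e) * (1 + x / e)).
Proof. intros. change (is_derive (fun e => e * exp (- x / e)) e (exp (- x / e) * (1 + x / e))). auto_derive. lra. unfold Rdiv; field. lra. Qed.

Lemma ph_lipe x e1 e2 : 0 <= x -> 0 <= e1 -> 0 <= e2 -> Rabs (ph x e1 - ph x e2) <= Rabs (e1 - e2).
Proof.
  intros Hx H1 H2.
  destruct (Req_dec e1 0) as [->|N1].
  { rewrite ph_0, !Rminus_0_l, !Rabs_Ropp, Rabs_right, Rabs_right by (try apply Rle_ge, ph_nn; lra).
    apply ph_le; auto. }
  destruct (Req_dec e2 0) as [->|N2].
  { rewrite ph_0, !Rminus_0_r, Rabs_right, Rabs_right by (try apply Rle_ge, ph_nn; lra).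
    apply ph_le; auto. }
  destruct (MVT_gen (ph x) e2 e1 (fun e => exp (- x / e) * (1 + x / e))) as [c [Hc Hc2]].
  - intros y Hy. apply ph_der. assert (0 < Rmin e2 e1) by (apply Rmin_glb_lt; lra). lra.
  - intros y Hy. assert (0 < Rmin e2 e1) by (apply Rmin_glb_lt; lra).
    apply continuity_pt_filterlim.
    exact (ex_derive_continuous (K:=R_AbsRing) (V:=R_NormedModule) _ _ (ex_intro _ _ (ph_der x y ltac:(lra)))).
  - assert (Hc0 : 0 < c) by (assert (0 < Rmin e2 e1) by (apply Rmin_glb_lt; lra); lra).
    rewrite Hc2, Rabs_mult.
    assert (A1 : 0 <= x / c) by (apply Rdiv_le_0_compat; lra).
    assert (A2 : exp (- x / c) * exp (x / c) = 1).
    { rewrite <- exp_plus. replace (- x / c + x / c) with 0 by (field; lra). apply exp_0. }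
    assert (A3 := exp_ineq1_le (x / c)).
    assert (A4 := exp_pos (- x / c)).
    assert (Rabs (exp (- x / c) * (1 + x / c)) <= 1).
    { rewrite Rabs_right by nra. nra. }
    pose proof (Rabs_pos (e1 - e2)). nra.
Qed.

Definition AA (kk mu t : R) := / kk^2 * exp (mu * t).
Definition uu (gm M kk mu : R) (x t : R) := AA kk mu t * (1 + M * ph x (ee gm t)).

Lemma AA_pos kk mu t : 0 < kk -> 0 < AA kk mu t.
Proof. intros. unfold AA. apply Rmult_lt_0_compat; [apply Rinv_0_lt_compat; nra| apply exp_pos]. Qed.

Lemma Mph_le gm L M x t : 1 <= L -> gm = 32 * L^2 -> M = 2 * L -> 0 <= x -> 0 <= t ->
  0 <= M * ph x (ee gm t) <= 1.
Proof.
  intros HL Hg HM Hx Ht. pose proof (ee_le gm L t HL Hg Ht).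
  pose proof (ph_le x (ee gm t) Hx (ee_nn _ _)). pose proof (ph_nn x (ee gm t) (ee_nn _ _)).
  split. nra.
  assert (M * / (2 * L) = 1) by (rewrite HM; field; lra). nra.
Qed.

Lemma master gm L M kk mu x x' t t' : 1 <= L -> gm = 32 * L^2 -> M = 2 * L -> 0 < kk ->
  0 <= x -> 0 <= x' -> 0 <= t -> 0 <= t' ->
  Rabs (uu gm M kk mu x' t' - uu gm M kk mu x t) <=
  2 * Rabs (AA kk mu t' - AA kk mu t) + AA kk mu t * M * (Rabs (x' - x) + Rabs (ee gm t' - ee gm t)).
Proof.
  intros HL Hg HM Hk Hx Hx' Ht Ht'. unfold uu.
  pose proof (Mph_le gm L M x' t' HL Hg HM Hx' Ht').
  set (p' := ph x' (ee gm t')) in *. set (p := ph x (ee gm t)).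
  assert (E : AA kk mu t' * (1 + M * p') - AA kk mu t * (1 + M * p) =
     (AA kk mu t' - AA kk mu t) * (1 + M * p') + AA kk mu t * M * (p' - p)) by ring.
  rewrite E.
  assert (Hp : Rabs (p' - p) <= Rabs (x' - x) + Rabs (ee gm t' - ee gm t)).
  { replace (p' - p) with ((ph x' (ee gm t') - ph x' (ee gm t)) + (ph x' (ee gm t) - ph x (ee gm t))) by (unfold p, p'; ring).
    eapply Rle_trans; [apply Rabs_triang|].
    pose proof (ph_lipe x' _ _ Hx' (ee_nn gm t') (ee_nn gm t)).
    pose proof (ph_lipx x' x _ Hx' Hx (ee_nn gm t)). lra. }
  pose proof (AA_pos kk mu t Hk).
  eapply Rle_trans; [apply Rabs_triang|].
  rewrite !Rabs_mult, (Rabs_right (1 + M * p')) by lra.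
  rewrite (Rabs_right (AA kk mu t)) by lra. rewrite (Rabs_right M) by lra.
  pose proof (Rabs_pos (AA kk mu t' - AA kk mu t)). pose proof (Rabs_pos (p' - p)).
  assert (0 <= AA kk mu t * M) by nra.
  apply Rplus_le_compat. nra. apply Rmult_le_compat_l; [lra|exact Hp].
Qed.

Lemma AA_cont kk mu t : continuity_pt (AA kk mu) t.
Proof.
  apply continuity_pt_filterlim.
  apply (ex_derive_continuous (K:=R_AbsRing) (V:=R_NormedModule)).
  unfold AA. auto_derive. exact I.
Qed.

Lemma cont_pt gm L M kk mu t : 1 <= L -> gm = 32 * L^2 -> M = 2 * L -> 0 < kk -> 0 <= t ->
  forall eps, 0 < eps -> exists del, 0 < del /\ forall x x' t', 0 <= x -> 0 <= x' -> 0 <= t' ->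
   Rabs (x' - x) < del -> Rabs (t' - t) < del ->
   Rabs (uu gm M kk mu x' t' - uu gm M kk mu x t) < eps.
Proof.
  intros HL Hg HM Hk Ht eps He.
  assert (Hg1 : 1 <= gm) by nra.
  set (B := AA kk mu t * M).
  assert (HB : 0 <= B) by (unfold B; pose proof (AA_pos kk mu t Hk); nra).
  set (eta := eps / (4 * (B + 1))).
  assert (Heta : 0 < eta) by (unfold eta; apply Rdiv_lt_0_compat; lra).
  destruct (cpt_ed _ _ (AA_cont kk mu t) (eps/4) ltac:(lra)) as [d1 [Hd1 H1]].
  destruct (cpt_ed _ _ (ee_cont gm t Hg1 Ht) eta Heta) as [d2 [Hd2 H2]].
  exists (Rmin (Rmin d1 d2) eta). split.
  { apply Rmin_glb_lt; [apply Rmin_glb_lt|]; lra. }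
  intros x x' t' Hx Hx' Ht' Hxx Htt.
  pose proof (Rmin_l (Rmin d1 d2) eta). pose proof (Rmin_r (Rmin d1 d2) eta).
  pose proof (Rmin_l d1 d2). pose proof (Rmin_r d1 d2).
  eapply Rle_lt_trans; [apply (master gm L M kk mu x x' t t'); auto|].
  specialize (H1 t' ltac:(lra)). specialize (H2 t' ltac:(lra)).
  fold B.
  assert (B * (Rabs (x' - x) + Rabs (ee gm t' - ee gm t)) <= B * (2 * eta)).
  { apply Rmult_le_compat_l; lra. }
  assert (B * (2 * eta) < eps / 2).
  { unfold eta. apply Rmult_lt_reg_r with (B+1); [lra|].
    field_simplify; [|lra]. nra. }
  lra.
Qed.

Lemma dx_u gm M kk mu t y : 1 <= gm -> 0 < t ->
  is_derive (fun z => uu gm M kk mu z t) y (- AA kk mu t * M * exp (- y / ee gm t)).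
Proof.
  intros Hg Ht. pose proof (ee_pos gm t Hg Ht). unfold uu, ph.
  set (e := ee gm t) in *. set (A := AA kk mu t).
  auto_derive. lra. unfold Rdiv. field. lra.
Qed.

Lemma dxx_u gm M kk mu t x : 1 <= gm -> 0 < t ->
  is_derive (fun y => - AA kk mu t * M * exp (- y / ee gm t)) x (AA kk mu t * M * exp (- x / ee gm t) / ee gm t).
Proof.
  intros Hg Ht. pose proof (ee_pos gm t Hg Ht).
  set (e := ee gm t) in *. set (A := AA kk mu t).
  auto_derive. lra. unfold Rdiv. field. lra.
Qed.

Lemma dt_u gm M kk mu t x : 1 <= gm -> 0 < t ->
  is_derive (fun s => uu gm M kk mu x s) t
   (mu * AA kk mu t * (1 + M * ph x (ee gm t)) +
    AA kk mu t * M * (4/((1+gm*t)^2 * ee gm t) * exp (- x / ee gm t) * (1 + x / ee gm t))).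
Proof.
  intros Hg Ht. pose proof (ee_pos gm t Hg Ht). pose proof (ee_der gm t Hg Ht).
  unfold uu, AA, ph.
  auto_derive.
  - split; [exists (4/((1+gm*t)^2 * ee gm t)); auto|]. split; [exists (4/((1+gm*t)^2 * ee gm t)); auto|]. split; [lra|exact I].
  - replace (Derive (fun x0 : R => ee gm x0) t) with (4/((1+gm*t)^2 * ee gm t))
      by (symmetry; apply is_derive_unique; exact H0).
    replace (/ (kk * (kk * 1))) with (/ kk^2) by (f_equal; ring).
    set (iv := / kk^2). set (e := ee gm t) in *. unfold Rdiv. field. split; [lra|nra].
Qed.

Lemma pde_part gm L M c kk mu t x : 1 <= L -> gm = 32 * L^2 -> M = 2 * L -> 0 <= c -> 0 < kk ->
  M * (gm + c) + 1 <= mu -> 0 < t -> 0 < x ->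
  ex_derive (fun t' => uu gm M kk mu x t') t /\
  (forall x', 0 < x' -> ex_derive (fun y => uu gm M kk mu y t) x') /\
  ex_derive (fun y => Derive (fun z => uu gm M kk mu z t) y) x /\
  Derive (fun t' => uu gm M kk mu x t') t >=
    Derive (fun y => Derive (fun z => uu gm M kk mu z t) y) x
    - c * Derive (fun y => uu gm M kk mu y t) x.
Proof.
  intros HL Hg HM Hc Hk Hmu Ht Hx.
  assert (Hg1 : 1 <= gm) by nra.
  assert (Dx : forall y, Derive (fun z => uu gm M kk mu z t) y = - AA kk mu t * M * exp (- y / ee gm t)).
  { intros y. apply is_derive_unique, dx_u; auto. }
  split; [eexists; apply dt_u; auto|].
  split; [intros x' _; eexists; apply dx_u; auto|].
  split.
  { eapply ex_derive_ext. intros y. symmetry. apply Dx. eexists; apply dxx_u; auto. }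
  rewrite (Derive_ext (fun y => Derive (fun z => uu gm M kk mu z t) y) _ x Dx).
  replace (Derive (fun y => - AA kk mu t * M * exp (- y / ee gm t)) x) with
    (AA kk mu t * M * exp (- x / ee gm t) / ee gm t) by (symmetry; apply is_derive_unique; apply dxx_u; auto).
  replace (Derive (fun t' => uu gm M kk mu x t') t) with
   (mu * AA kk mu t * (1 + M * ph x (ee gm t)) +
    AA kk mu t * M * (4/((1+gm*t)^2 * ee gm t) * exp (- x / ee gm t) * (1 + x / ee gm t)))
    by (symmetry; apply is_derive_unique; apply dt_u; auto).
  rewrite Dx.
  pose proof (ee_pos gm t Hg1 Ht) as He. pose proof (ee_key gm t Hg1 Ht) as Hkey.
  pose proof (AA_pos kk mu t Hk) as HA.
  unfold ph.
  set (e := ee gm t) in *. set (A := AA kk mu t) in *.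
  set (e' := 4 / ((1 + gm * t) ^ 2 * e)) in *.
  set (E := exp (- x / e)).
  assert (HE0 : 0 < E) by apply exp_pos.
  assert (HE1 : E <= 1).
  { unfold E, Rdiv. rewrite Ropp_mult_distr_l_reverse. apply expm_le1.
    apply Rmult_le_pos; [lra| left; apply Rinv_0_lt_compat; lra]. }
  assert (He' : 0 <= e') by (unfold e'; apply Rdiv_le_0_compat; [lra| apply Rmult_lt_0_compat; [apply pow_lt; nra|lra]]).
  assert (Hxe : 0 <= x / e) by (apply Rdiv_le_0_compat; lra).
  assert (HM2 : 2 <= M) by lra.
  assert (Q1 : mu * (1 + M * (e * E)) >= M * (gm + c) + 1).
  { assert (0 <= M * (e * E)) by (apply Rmult_le_pos; [lra| apply Rmult_le_pos; lra]).
    assert (0 <= mu * (M * (e * E))) by (apply Rmult_le_pos; [nra| lra]). nra. }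
  assert (Q2 : e' * (1 + x / e) - / e - c >= - gm - c).
  { assert (e' * (x/e) >= 0) by (apply Rle_ge, Rmult_le_pos; lra). nra. }
  assert (Q3 : M * E * (e' * (1 + x / e) - / e - c) >= - (M * (gm + c))).
  { assert (0 <= M * E) by nra. 
    assert (M * E * (e' * (1 + x / e) - / e - c) >= M * E * (- gm - c)) by (apply Rle_ge, Rmult_le_compat_l; lra).
    assert (M * E * (gm + c) <= M * (gm + c)).
    { assert (0 <= M * (gm + c)) by nra. 
      replace (M * E * (gm + c)) with (E * (M * (gm + c))) by ring. nra. }
    nra. }
  assert (Q : 0 <= mu * (1 + M * (e * E)) + M * E * (e' * (1 + x / e) - / e - c)) by lra.
  assert (Eq : mu * A * (1 + M * (e * E)) + A * M * (e' * E * (1 + x / e)) -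
     (A * M * E / e - c * (- A * M * (E))) = A * (mu * (1 + M * (e * E)) + M * E * (e' * (1 + x / e) - / e - c)))
    by (field; lra).
  fold E. apply Rle_ge. apply Rminus_le_0 with (r1 := A * M * E / e - c * (- A * M * E)) in Q || idtac.
  assert (0 <= A * (mu * (1 + M * (e * E)) + M * E * (e' * (1 + x / e) - / e - c))) by (apply Rmult_le_pos; lra).
  lra.
Qed.

Lemma rd_of_der (u : R -> R -> R) t l : is_derive (fun h => u h t) 0 l -> right_dx0 u t l.
Proof.
  intros H. apply is_derive_Reals in H. unfold right_dx0.
  apply filterlim_locally. intros eps.
  destruct (H eps (cond_pos eps)) as [del Hd].
  exists del. intros y Hy Hpos.
  unfold ball in *; simpl in *. unfold AbsRing_ball, abs, minus, plus, opp in *; simpl in *.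
  assert (Hy' : Rabs y < del) by (rewrite <- (Rminus_0_r y); exact Hy).
  specialize (Hd y ltac:(lra) Hy'). rewrite Rplus_0_l in Hd. exact Hd.
Qed.

Lemma ln_le' x y : 0 < x -> x <= y -> ln x <= ln y.
Proof. intros. destruct (Req_dec x y) as [->|]; [lra|]. left; apply ln_increasing; lra. Qed.

Lemma exp_le' x y : x <= y -> exp x <= exp y.
Proof. intros. destruct (Req_dec x y) as [->|]; [lra|]. left; apply exp_increasing; lra. Qed.

Lemma ph0 e : ph 0 e = e.
Proof. unfold ph. rewrite Ropp_0, Rdiv_0_l, exp_0. ring. Qed.

Lemma bdry gm L M kk mu (g : R -> R) d t : 1 <= L -> gm = 32 * L^2 -> M = 2 * L -> 0 < kk -> 0 < t ->
  (forall y, 0 <= y <= d -> -L*y <= g y) -> uu gm M kk mu 0 t <= d ->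
  exists l, right_dx0 (uu gm M kk mu) t l /\ l <= g (uu gm M kk mu 0 t).
Proof.
  intros HL Hg HM Hk Ht Hgl Hd.
  assert (Hg1 : 1 <= gm) by nra.
  exists (- AA kk mu t * M * exp (- 0 / ee gm t)). split.
  { apply rd_of_der. apply dx_u; auto. }
  rewrite Ropp_0, Rdiv_0_l, exp_0, Rmult_1_r.
  pose proof (Mph_le gm L M 0 t HL Hg HM ltac:(lra) ltac:(lra)) as Hm.
  pose proof (AA_pos kk mu t Hk).
  assert (H0 : 0 <= uu gm M kk mu 0 t) by (unfold uu; apply Rmult_le_pos; lra).
  specialize (Hgl _ (conj H0 Hd)).
  unfold uu in *. set (p := M * ph 0 (ee gm t)) in *. set (A := AA kk mu t) in *.
  assert (L * (A * (1 + p)) <= A * M).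
  { rewrite HM. assert (A * (1 + p) <= A * 2) by (apply Rmult_le_compat_l; lra). nra. }
  lra.
Qed.

Theorem lemma18 (g : R -> R) (c : R) :
  C2 g -> periodic_2pi g -> 0 <= c ->
  (exists y1, 0 < y1 /\ g 0 = 0 /\ g y1 = 0 /\
     forall y, 0 < y < y1 -> g y < 0) ->
  exists (K : nat) (T : nat -> R) (u : nat -> R -> R -> R),
    (forall k : nat, (K <= k)%nat ->
       0 < T k /\
       C_BUC (T k) (u k) /\
       (forall x, 0 <= x -> u k x 0 = / (INR k ^ 2)) /\
       supersolution c g 0 (T k) (u k) /\
       u k 0 (T k) = / INR k) /\
    is_lim_seq T p_infty.
Proof.
  intros HC2 _ Hc [y1 [_ [Hg0 _]]].
  destruct (g_lower g HC2 Hg0) as [L [d [HL [Hd Hgl]]]].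
  set (M := 2 * L). set (gm := 32 * L^2). set (D := M * (gm + c) + 1).
  assert (HM : M = 2 * L) by reflexivity. assert (Hgm : gm = 32 * L^2) by reflexivity.
  assert (Hg1 : 1 <= gm) by (unfold gm; nra).
  assert (HD : 1 <= D) by (unfold D, M; nra).
  destruct (INR_unbounded (4 + 2/d)) as [K HK].
  assert (H2d : 0 < 2 / d) by (apply Rdiv_lt_0_compat; lra).
  set (T := fun k : nat => ln (INR k) / (2 * D)).
  set (mu := fun k : nat => (ln (INR k) - ln (1 + M * ee gm (T k))) / T k).
  exists K, T, (fun k => uu gm M (INR k) (mu k)).
  split.
  - intros k Hk. apply le_INR in Hk.
    set (kk := INR k) in *.
    assert (Hkk : 4 + 2 / d < kk) by lra.
    assert (Hkp : 0 < kk) by lra.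
    assert (Hln2 := ln_lt_2).
    assert (Hl4 : ln 4 = 2 * ln 2).
    { replace 4 with (2 * 2) by ring. rewrite ln_mult by lra. ring. }
    assert (Hlk : ln 4 <= ln kk) by (apply ln_le'; lra).
    assert (HT : 0 < T k) by (unfold T; fold kk; apply Rdiv_lt_0_compat; lra).
    set (eT := ee gm (T k)).
    assert (HeT : 0 <= M * eT <= 1).
    { pose proof (ee_le gm L (T k) HL Hgm ltac:(lra)). pose proof (ee_nn gm (T k)).
      fold eT in H, H0. split; [unfold M; nra|].
      assert (M * / (2 * L) = 1) by (unfold M; field; lra). 
      assert (M * eT <= M * / (2 * L)) by (apply Rmult_le_compat_l; unfold M; lra). lra. }
    assert (Hl1 : ln (1 + M * eT) <= ln 2) by (apply ln_le'; lra).
    assert (Hl1' : 0 <= ln (1 + M * eT)).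
    { rewrite <- ln_1. apply ln_le'; lra. }
    assert (HmuT : mu k * T k = ln kk - ln (1 + M * eT)).
    { unfold mu. fold kk eT. field. lra. }
    assert (Hmu : D <= mu k).
    { apply Rmult_le_reg_r with (T k); [lra|]. rewrite HmuT.
      unfold T; fold kk. replace (D * (ln kk / (2 * D))) with (ln kk / 2) by (field; lra). lra. }
    assert (HmuP : 0 < mu k) by lra.
    assert (HAT : AA kk (mu k) (T k) * (1 + M * eT) = / kk).
    { unfold AA. rewrite HmuT. unfold Rminus. rewrite exp_plus, exp_Ropp, exp_ln, exp_ln by lra.
      field. lra. }
    assert (HATle : AA kk (mu k) (T k) <= / kk).
    { rewrite <- HAT. pose proof (AA_pos kk (mu k) (T k) Hkp). nra. }
    split; [exact HT|].
    split; [|split; [|split]].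
    +
      split.
      * intros t Ht. split.
        -- exists (2 * AA kk (mu k) t). intros x Hx.
           pose proof (Mph_le gm L M x t HL Hgm HM Hx ltac:(lra)).
           pose proof (AA_pos kk (mu k) t Hkp).
           unfold uu. rewrite Rabs_right by nra. nra.
        -- intros eps He.
           destruct (cont_pt gm L M kk (mu k) t HL Hgm HM Hkp ltac:(lra) eps He) as [del [Hdel Hc']].
           exists del. split; [auto|]. intros x y Hx Hy Hxy.
           apply (Hc' y x t); [lra|lra|lra|exact Hxy| rewrite Rminus_diag, Rabs_R0; lra].
      * intros t Ht eps He.
        destruct (cont_pt gm L M kk (mu k) t HL Hgm HM Hkp ltac:(lra) eps He) as [del [Hdel Hc']].
        exists del. split; [auto|]. intros t' Ht' Htt x Hx.
        left. apply (Hc' x x t'); auto; try lra. rewrite Rminus_diag, Rabs_R0; lra.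
    + intros x Hx. unfold uu, AA. rewrite ee0, ph_0, Rmult_0_r, exp_0. ring.
    + split; [|split].
      * intros x t Hx Ht eps He.
        destruct (cont_pt gm L M kk (mu k) t HL Hgm HM Hkp ltac:(lra) eps He) as [del [Hdel Hc']].
        exists del. split; [auto|]. intros x' t' Hx' Ht' Hxx Htt. apply Hc'; auto; lra.
      * intros x t Hx Ht. apply (pde_part gm L M c kk (mu k) t x); auto; try lra.
      * intros t Ht. apply (bdry gm L M kk (mu k) g d t); auto; try lra.
        unfold uu. rewrite ph0.
        assert (AA kk (mu k) t <= AA kk (mu k) (T k)).
        { unfold AA. apply Rmult_le_compat_l. left; apply Rinv_0_lt_compat; nra.
          apply exp_le'. apply Rmult_le_compat_l; lra. }
        pose proof (Mph_le gm L M 0 t HL Hgm HM ltac:(lra) ltac:(lra)). rewrite ph0 in H0.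
        pose proof (AA_pos kk (mu k) t Hkp).
        assert (AA kk (mu k) t * (1 + M * ee gm t) <= 2 / kk).
        { assert (AA kk (mu k) t * (1 + M * ee gm t) <= AA kk (mu k) t * 2) by (apply Rmult_le_compat_l; lra).
          unfold Rdiv. lra. }
        assert (2 / kk <= d).
        { apply Rmult_le_reg_r with kk; [lra|]. unfold Rdiv. rewrite Rmult_assoc, Rinv_l by lra.
          assert (2 / d * d = 2) by (field; lra). nra. }
        lra.
    + unfold uu. rewrite ph0. fold eT. exact HAT.
  - apply is_lim_seq_p_infty_Reals. intros B.
    destruct (INR_unbounded (exp (2 * D * B))) as [N HN].
    exists N. intros n Hn. apply le_INR in Hn.
    unfold T. apply Rmult_lt_reg_r with (2 * D); [lra|].
    unfold Rdiv. rewrite Rmult_assoc, Rinv_l, Rmult_1_r by lra.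
    rewrite <- (ln_exp (B * (2 * D))).
    apply ln_increasing; [apply exp_pos|]. replace (B * (2 * D)) with (2 * D * B) by ring. lra.
Qed.
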